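(* (1) For disjoint finite sets $X,Y$, $f\in\mathrm{Bool}(X)$, $g\in\mathrm{Bool}(Y)$: $f\star_1g$ is rigid iff $f$ and $g$ are rigid. (2) If $f\in\mathrm{Bool}(X)$ is rigid then $f_{\mid Y}$ is rigid for every $Y\subseteq X$. (3) If $f\in\mathrm{Bool}(X)$ is rigid and $\sim\in\mathcal{E}^W(f)$, then $f/{\sim}$ is rigid.
   Context: A boolean function on a finite set $X$ is a map $f:\mathcal{P}(X)\to\mathbb{Z}$ with $f(\emptyset)=0$; $\mathrm{Bool}(X)$ is their set; $f_{\mid Y}$ is the restriction to $\mathcal{P}(Y)$. For disjoint $X,Y$, $(f\star_1g)(A)=f(A\cap X)+g(A\cap Y)$ (associative, commutative, unit $1\in\mathrm{Bool}(\emptyset)$). For nonempty $X$, $f$ is indecomposable if $f=f'\star_1f''$ with $f'\in\mathrm{Bool}(X\setminus Y)$, $f''\in\mathrm{Bool}(Y)$ forces $Y\in\{\emptyset,X\}$. Each $f$ determines a unique equivalence $\sim_f^i$ with $f=\prod^{\star_1}_{Y\in X/\sim_f^i}f_{\mid Y}$ and each $f_{\mid Y}$ indecomposable; its classes are the indecomposable components of $f$ and $\mathrm{ic}(f)$ is their number. For an equivalence $\sim$: $\mathrm{cl}(\sim)=|X/{\sim}|$, $\varpi_\sim$ the canonical surjection, $f/{\sim}(A)=f(\varpi_\sim^{-1}(A))$, $(f\mid\sim)(A)=\sum_{Y\in X/\sim}f(A\cap Y)$; $\mathcal{E}^W(f)=\{\sim:\mathrm{ic}(f\mid\sim)=\mathrm{cl}(\sim)\}$.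 An indecomposable $f$ is rigid if for all disjoint $A,B\subseteq X$ with $f(A\sqcup B)=f(A)+f(B)$, one has $f(A'\sqcup B')=f(A')+f(B')$ for all $A'\subseteq A$, $B'\subseteq B$; a general $f$ is rigid if $f_{\mid Y}$ is rigid for each indecomposable component $Y$. *)

(* Defs.v *)
From mathcomp Require Import all_boot all_order all_algebra.
Set Implicit Arguments. Unset Strict Implicit. Unset Printing Implicit Defensive.
Import GRing.Theory Num.Theory.
Local Open Scope ring_scope.

(* A boolean function on a finite set X (a finite subset of a finType T) is
   represented by f : {set T} -> int; only its values on subsets of X matter. *)
Definition boolfun (T : finType) (f : {set T} -> int) : Prop := f set0 = 0.

Definition bstar (T : finType) (X Y : {set T}) (f g : {set T} -> int)
  : {set T} -> int := fun A => f (A :&: X) + g (A :&: Y).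

Definition indecomposable (T : finType) (X : {set T}) (f : {set T} -> int)
  : Prop :=
  X != set0 /\
  forall (Y : {set T}) (f' f'' : {set T} -> int),
    Y \subset X -> boolfun f' -> boolfun f'' ->
    (forall A : {set T}, A \subset X -> f A = bstar (X :\: Y) Y f' f'' A) ->
    Y = set0 \/ Y = X.

Definition ic_partition (T : finType) (X : {set T}) (f : {set T} -> int)
  (P : {set {set T}}) : Prop :=
  partition P X /\
  (forall A : {set T}, A \subset X -> f A = \sum_(Y in P) f (A :&: Y)) /\
  (forall Y, Y \in P -> indecomposable Y f).

Definition ic_eq (T : finType) (X : {set T}) (f : {set T} -> int) (n : nat)
  : Prop := exists P, ic_partition X f P /\ #|P| = n.

Definition rigid_indec (T : finType) (X : {set T}) (f : {set T} -> int)
  : Prop :=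
  forall A B : {set T}, A \subset X -> B \subset X -> [disjoint A & B] ->
    f (A :|: B) = f A + f B ->
    forall A' B' : {set T}, A' \subset A -> B' \subset B ->
      f (A' :|: B') = f A' + f B'.

Definition rigid (T : finType) (X : {set T}) (f : {set T} -> int) : Prop :=
  forall P, ic_partition X f P -> forall Y, Y \in P -> rigid_indec Y f.

(* For an equivalence on X given by its set of classes P (partition P X):
   (f | ~)(A) = sum_{Y in X/~} f (A :&: Y) *)
Definition fres (T : finType) (P : {set {set T}}) (f : {set T} -> int)
  : {set T} -> int := fun A => \sum_(Y in P) f (A :&: Y).

(* f / ~ : a boolean function on X/~ = P; the preimage of B \subset P under
   the canonical surjection is cover B *)
Definition fquot (T : finType) (P : {set {set T}}) (f : {set T} -> int)
  : {set {set T}} -> int := fun B => f (cover B).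

Definition EW (T : finType) (X : {set T}) (f : {set T} -> int)
  (P : {set {set T}}) : Prop := ic_eq X (fres P f) #|P|.

(* Main.v *)
Require Import Defs.
From mathcomp Require Import all_boot all_order all_algebra.
From Stdlib Require Import Classical.
From mathcomp Require Import zify.
Set Implicit Arguments. Unset Strict Implicit. Unset Printing Implicit Defensive.
Import GRing.Theory Num.Theory.
Local Open Scope ring_scope.

Section Aux.
Variable T : finType.
Implicit Types (X Y Z A B C : {set T}) (f g : {set T} -> int) (P Q : {set {set T}}).

Lemma in_cover_sub P X C : partition P X -> C \in P -> C \subset X.
Proof. by case/and3P=> /eqP <- _ _ CP; rewrite /cover bigcup_sup. Qed.

Lemma part_nonempty P X C : partition P X -> C \in P -> C != set0.
Proof. by case/and3P=> _ _ P0 CP; apply: contraNneq P0 => <-. Qed.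

Lemma part_eq P X C C' x : partition P X -> C \in P -> C' \in P ->
  x \in C -> x \in C' -> C = C'.
Proof.
case/and3P=> _ tP _ CP C'P xC xC'.
by rewrite -(def_pblock tP CP xC) (def_pblock tP C'P xC').
Qed.

Lemma part_cover P X x : partition P X -> x \in X -> exists2 C, C \in P & x \in C.
Proof. by case/and3P=> /eqP <- _ _ /bigcupP. Qed.

Definition agree X f g := forall A, A \subset X -> f A = g A.

Lemma indec_agree X f g : agree X f g -> indecomposable X f -> indecomposable X g.
Proof.
move=> ag [X0 H]; split=> // Y f' f'' sYX b1 b2 Hd; apply: (H Y f' f'') => // A sAX.
by rewrite ag // Hd.
Qed.

Lemma agree_sub X Y f g : Y \subset X -> agree X f g -> agree Y f g.
Proof. by move=> sYX ag A sAY; apply: ag; apply: subset_trans sAY sYX. Qed.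

Lemma agree_sym X f g : agree X f g -> agree X g f.
Proof. by move=> ag A sA; rewrite ag. Qed.

Lemma rigid_indec_agree X f g : agree X f g -> rigid_indec X f -> rigid_indec X g.
Proof.
move=> ag H A B sAX sBX dAB e A' B' sA' sB'.
have sA'X := subset_trans sA' sAX; have sB'X := subset_trans sB' sBX.
rewrite -!ag ?subUset ?sA'X ?sB'X //; apply: (H A B) => //.
by rewrite !ag ?subUset ?sAX ?sBX.
Qed.

Lemma ic_agree X f g P : agree X f g -> ic_partition X f P -> ic_partition X g P.
Proof.
move=> ag [pP [sP iP]]; split=> //; split.
  move=> A sAX; rewrite -ag // sP //; apply: eq_bigr => C CP; apply: ag.
  exact: subset_trans (subsetIl _ _) sAX.
move=> C CP; apply: indec_agree (iP C CP); exact: agree_sub (in_cover_sub pP CP) ag.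
Qed.

Lemma rigid_agree X f g : agree X f g -> rigid X f -> rigid X g.
Proof.
move=> ag H P icP C CP; have icP' := ic_agree (agree_sym ag) icP.
apply: rigid_indec_agree (H P icP' C CP); apply: agree_sub ag.
exact: in_cover_sub (proj1 icP) CP.
Qed.

Lemma rigid_indec_sub X Y f : Y \subset X -> rigid_indec X f -> rigid_indec Y f.
Proof. by move=> sYX H A B sA sB; apply: H; apply: subset_trans sYX. Qed.

Lemma L2 X f P Z : boolfun f -> partition P X ->
  (forall A, A \subset X -> f A = \sum_(C in P) f (A :&: C)) ->
  Z \subset X -> indecomposable Z f -> exists2 C, C \in P & Z \subset C.
Proof.
move=> f0 pP sP sZX [Z0 H].
case/set0Pn: Z0 => z zZ.
have [C0 C0P zC0] := part_cover pP (subsetP sZX z zZ).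
exists C0 => //.
pose f' := fun A => \sum_(C in P | C != C0) f (A :&: C).
have b' : boolfun f' by rewrite /boolfun /f'; apply: big1 => C _; rewrite set0I.
have := H (Z :&: C0) f' f (subsetIl _ _) b' f0.
case.
- move=> A sAZ; rewrite /bstar (sP A (subset_trans sAZ sZX)) (bigD1 C0) //= addrC.
  congr (_ + _).
    rewrite /f'; apply: eq_bigr => C /andP[CP nC].
    congr f; apply/setP => x; rewrite !inE.
    case xA: (x \in A) => //=; case xC: (x \in C) => //=; rewrite ?andbF //.
    have nxC0 : (x \in C0) = false.
      apply/negbTE/negP => xC0.
      by rewrite (part_eq pP CP C0P xC xC0) eqxx in nC.
    by rewrite nxC0 (subsetP sAZ x xA).
  congr f; apply/setP => x; rewrite !inE.
  by case xA: (x \in A) => //=; rewrite (subsetP sAZ x xA).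
- move=> e; have : z \in Z :&: C0 by rewrite inE zZ zC0.
  by rewrite e inE.
- by move=> e; rewrite -e subsetIr.
Qed.

Lemma part_union P1 P2 X1 X2 : [disjoint X1 & X2] -> partition P1 X1 ->
  partition P2 X2 -> partition (P1 :|: P2) (X1 :|: X2) /\ [disjoint P1 & P2].
Proof.
move=> d p1 p2; split.
  move: (p1) (p2) => /and3P[/eqP c1 t1 n1] /and3P[/eqP c2 t2 n2].
  apply/and3P; split.
  - by rewrite /cover bigcup_setU -/(cover P1) -/(cover P2) c1 c2.
  - by apply: trivIsetU => //; rewrite c1 c2.
  - by rewrite inE negb_or n1 n2.
rewrite -setI_eq0; apply/eqP/setP => C; rewrite !inE.
apply/negbTE/andP => [[C1 C2]].
case/set0Pn: (part_nonempty p1 C1) => x xC.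
have := disjointFr d (subsetP (in_cover_sub p1 C1) x xC).
by rewrite (subsetP (in_cover_sub p2 C2) x xC).
Qed.

Lemma ic_union f X1 X2 P1 P2 : [disjoint X1 & X2] -> ic_partition X1 f P1 ->
  ic_partition X2 f P2 ->
  (forall A, A \subset X1 :|: X2 -> f A = f (A :&: X1) + f (A :&: X2)) ->
  ic_partition (X1 :|: X2) f (P1 :|: P2).
Proof.
move=> d [p1 [s1 i1]] [p2 [s2 i2]] H.
have [pU dP] := part_union d p1 p2.
split=> //; split.
  move=> A sA.
  rewrite (eq_bigl [predU P1 & P2]); last by move=> C; rewrite !inE.
  rewrite H // bigU //= s1 ?subsetIr // s2 ?subsetIr //.
  congr (_ + _); apply: eq_bigr => C CP; congr f; rewrite -setIA;
    congr (_ :&: _); apply/setIidPr.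
    exact: in_cover_sub p1 CP.
  exact: in_cover_sub p2 CP.
by move=> C /setUP[]; [exact: i1 | exact: i2].
Qed.

Lemma ic_exists f X : boolfun f -> exists P, ic_partition X f P.
Proof.
move=> f0; have [n] := ubnP #|X|; elim: n X => // n IH X ltXn.
have [->|X0] := eqVneq X set0.
  exists set0; split; first by rewrite partition_set0.
  split; last by move=> C; rewrite inE.
  by move=> A; rewrite subset0 => /eqP ->; rewrite big_set0.
have [Hi|Hn] := classic (indecomposable X f).
  exists [set X]; split.
    by rewrite /partition cover1 trivIset1 inE eq_sym X0 eqxx.
  split; last by move=> C /set1P ->.
  by move=> A sAX; rewrite big_set1 (setIidPl sAX).
have [Y [f' [f'' [sYX [b1 [b2 [Hd [Y0 YX]]]]]]]] : exists Y f' f'',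
   Y \subset X /\ boolfun f' /\ boolfun f'' /\
   (forall A, A \subset X -> f A = bstar (X :\: Y) Y f' f'' A) /\
   Y != set0 /\ Y != X.
  apply: NNPP => Hc; apply: Hn; split=> // Y f' f'' sYX b1 b2 Hd.
  case: (eqVneq Y set0) => [->|Y0]; [by left|].
  case: (eqVneq Y X) => [->|YX]; [by right|].
  by exfalso; apply: Hc; exists Y, f', f''; do 4 split=> //; split.
have sDX : X :\: Y \subset X by apply: subsetDl.
have e1 : forall B, B \subset X :\: Y -> f B = f' B.
  move=> B sB; rewrite Hd ?(subset_trans sB sDX) // /bstar (setIidPl sB).
  have -> : B :&: Y = set0.
    apply/setP => x; rewrite !inE; apply/negbTE/andP => [[xB xY]].
    by have := subsetP sB x xB; rewrite inE xY.
  by rewrite b2 addr0.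
have e2 : forall B, B \subset Y -> f B = f'' B.
  move=> B sB; rewrite Hd ?(subset_trans sB sYX) // /bstar (setIidPl sB).
  have -> : B :&: (X :\: Y) = set0.
    apply/setP => x; rewrite !inE; apply/negbTE/andP => [[xB /andP[nY _]]].
    by rewrite (subsetP sB x xB) in nY.
  by rewrite b1 add0r.
have key : forall A, A \subset X -> f A = f (A :&: (X :\: Y)) + f (A :&: Y).
  by move=> A sAX; rewrite Hd // /bstar e1 ?subsetIr // e2 ?subsetIr.
have cY : (#|Y| > 0)%N by rewrite card_gt0.
have [P1 ic1] : exists P, ic_partition (X :\: Y) f P.
  apply: IH; rewrite cardsD (setIidPr sYX).
  have := leq_ltn_trans (subset_leq_card sYX) ltXn.
  move: ltXn; lia.
have [P2 ic2] : exists P, ic_partition Y f P.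
  apply: IH; have : (#|Y| < #|X|)%N.
    by apply: proper_card; rewrite properEneq YX sYX.
  move: ltXn; lia.
have eX : X = (X :\: Y) :|: Y.
  apply/setP => x; rewrite !inE; case xY: (x \in Y) => /=.
    by rewrite (subsetP sYX x xY).
  by rewrite orbF.
exists (P1 :|: P2); rewrite eX; apply: ic_union => //.
  rewrite -setI_eq0; apply/eqP/setP => x; rewrite !inE.
  by case: (x \in Y); rewrite ?andbF.
by move=> A; rewrite -eX; apply: key.
Qed.

Lemma part2 X Y f : boolfun f -> rigid X f -> Y \subset X -> rigid Y f.
Proof.
move=> f0 rX sYX Q icQ Z ZQ.
have [P icP] := ic_exists X f0.
have sZY := in_cover_sub (proj1 icQ) ZQ.
have [C CP sZC] := L2 f0 (proj1 icP) (proj1 (proj2 icP))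
  (subset_trans sZY sYX) (proj2 (proj2 icQ) Z ZQ).
exact: rigid_indec_sub sZC (rX P icP C CP).
Qed.

Lemma disj_I0 X Y A : [disjoint X & Y] -> A \subset X -> A :&: Y = set0.
Proof.
move=> d sA; apply/setP => x; rewrite !inE; apply/negbTE/andP => [[xA xY]].
by have := disjointFr d (subsetP sA x xA); rewrite xY.
Qed.

Lemma bstar_agreeL X Y f g : [disjoint X & Y] -> boolfun g ->
  agree X (bstar X Y f g) f.
Proof. by move=> d g0 A sA; rewrite /bstar (setIidPl sA) (disj_I0 d sA) g0 addr0. Qed.

Lemma bstar_agreeR X Y f g : [disjoint X & Y] -> boolfun f ->
  agree Y (bstar X Y f g) g.
Proof.
move=> d f0 A sA; rewrite /bstar (setIidPl sA) (@disj_I0 Y X) ?f0 ?add0r //.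
by rewrite disjoint_sym.
Qed.

Lemma part1 X Y f g : [disjoint X & Y] -> boolfun f -> boolfun g ->
  (rigid (X :|: Y) (bstar X Y f g) <-> rigid X f /\ rigid Y g).
Proof.
move=> d f0 g0.
have h0 : boolfun (bstar X Y f g) by rewrite /boolfun /bstar !set0I f0 g0 addr0.
have aL := bstar_agreeL f d g0; have aR := bstar_agreeR g d f0.
split=> [H | [rf rg]].
  split.
    apply: rigid_agree aL _; apply: part2 h0 H _; exact: subsetUl.
  apply: rigid_agree aR _; apply: part2 h0 H _; exact: subsetUr.
move=> Q icQ Z ZQ.
have [P1 ic1] := ic_exists X f0; have [P2 ic2] := ic_exists Y g0.
have ic1' := ic_agree (agree_sym aL) ic1.
have ic2' := ic_agree (agree_sym aR) ic2.
have icU : ic_partition (X :|: Y) (bstar X Y f g) (P1 :|: P2).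
  apply: ic_union => // A sA.
  rewrite [bstar _ _ _ _ (A :&: X)]aL ?subsetIr //.
  by rewrite [bstar _ _ _ _ (A :&: Y)]aR ?subsetIr.
have [C /setUP[CP|CP] sZC] := L2 h0 (proj1 icU) (proj1 (proj2 icU))
  (in_cover_sub (proj1 icQ) ZQ) (proj2 (proj2 icQ) Z ZQ).
  apply: rigid_indec_sub sZC _; apply: rigid_indec_agree (rf P1 ic1 C CP).
  exact: agree_sub (in_cover_sub (proj1 ic1) CP) (agree_sym aL).
apply: rigid_indec_sub sZC _; apply: rigid_indec_agree (rg P2 ic2 C CP).
exact: agree_sub (in_cover_sub (proj1 ic2) CP) (agree_sym aR).
Qed.

Lemma cover_sub P Q : P \subset Q -> cover P \subset cover Q.
Proof.
move=> sPQ; apply/bigcupsP => Y YP; rewrite /cover; apply: bigcup_sup.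
exact: subsetP sPQ Y YP.
Qed.

Lemma cover_disj P (A B : {set {set T}}) X : partition P X -> A \subset P -> B \subset P ->
  [disjoint A & B] -> [disjoint cover A & cover B].
Proof.
move=> pP sA sB dAB; rewrite -setI_eq0; apply/eqP/setP => x; rewrite !inE.
apply/negbTE/andP => [[/bigcupP[Y YA xY] /bigcupP[Y' YB xY']]].
have eY := part_eq pP (subsetP sA Y YA) (subsetP sB Y' YB) xY xY'.
by have := disjointFr dAB YA; rewrite eY YB.
Qed.

Lemma fres_agree P X f Y : boolfun f -> partition P X -> Y \in P ->
  agree Y (fres P f) f.
Proof.
move=> f0 pP YP A sAY; rewrite /fres (bigD1 Y) //= (setIidPl sAY) big1 ?addr0 //.
move=> Y' /andP[Y'P nY]; rewrite -[RHS]f0; congr f.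
apply/setP => x; rewrite !inE; apply/negbTE/andP => [[xA xY']].
by rewrite (part_eq pP YP Y'P (subsetP sAY x xA) xY') eqxx in nY.
Qed.

Lemma refine_lem X f P P0 : boolfun f -> partition P X -> EW X f P ->
  ic_partition X f P0 -> forall Y, Y \in P -> exists2 C, C \in P0 & Y \subset C.
Proof.
move=> f0 pP [Q [[pQ [sQ iQ]] cQ]] [pP0 [sP0 iP0]].
have fr0 : boolfun (fres P f) by rewrite /boolfun /fres; apply: big1 => Y _; rewrite set0I.
have sP : forall A, A \subset X -> fres P f A = \sum_(Y in P) fres P f (A :&: Y).
  move=> A sAX; rewrite [in LHS]/fres; apply: eq_bigr => Y YP.
  by rewrite (fres_agree f0 pP YP) ?subsetIr.
have gdef : forall Z, Z \in Q -> exists2 Y, Y \in P & Z \subset Y.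
  move=> Z ZQ; exact: L2 fr0 pP sP (in_cover_sub pQ ZQ) (iQ Z ZQ).
pose g Z := odflt set0 [pick Y in P | Z \subset Y].
have gP : forall Z, Z \in Q -> g Z \in P /\ Z \subset g Z.
  move=> Z ZQ; rewrite /g; case: pickP => [Y /andP[YP sZY]|none] //=.
  exfalso; have [Y YP sZY] := gdef Z ZQ.
  by have := none Y; rewrite YP sZY.
have gsurj : g @: Q = P.
  apply/eqP; rewrite eqEsubset; apply/andP; split.
    by apply/subsetP=> Y /imsetP[Z ZQ ->]; exact: (gP Z ZQ).1.
  apply/subsetP=> Y YP; case/set0Pn: (part_nonempty pP YP) => x xY.
  have [Z ZQ xZ] := part_cover pQ (subsetP (in_cover_sub pP YP) x xY).
  have [gZP sZg] := gP Z ZQ.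
  rewrite (part_eq pP YP gZP xY (subsetP sZg x xZ)); exact: imset_f.
have ginj : {in Q &, injective g} by apply/imset_injP; rewrite gsurj cQ.
move=> Y YP.
have : Y \in g @: Q by rewrite gsurj.
case/imsetP => Z ZQ eY.
have eYZ : Y = Z.
  apply/eqP; rewrite eqEsubset; apply/andP; split; last first.
    by rewrite eY; exact: (gP Z ZQ).2.
  apply/subsetP => x xY.
  have [Z' Z'Q xZ'] := part_cover pQ (subsetP (in_cover_sub pP YP) x xY).
  have [gZ'P sZ'] := gP Z' Z'Q.
  have : g Z' = g Z.
    by rewrite -eY; apply: part_eq pP gZ'P YP (subsetP sZ' x xZ') xY.
  by move/ginj => <-.
have iY : indecomposable Y f.
  by apply: indec_agree (fres_agree f0 pP YP) _; rewrite eYZ; exact: iQ.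
exact: L2 f0 pP0 sP0 (in_cover_sub pP YP) iY.
Qed.

End Aux.

Lemma part3 (T : finType) (X : {set T}) (f : {set T} -> int) (P : {set {set T}}) :
  boolfun f -> rigid X f -> partition P X -> EW X f P ->
  rigid P (fquot P f).
Proof.
move=> f0 rX pP EWP R icR W WR.
have fq0 : boolfun (fquot P f) by rewrite /boolfun /fquot /cover big_set0.
have [P0 icP0] := ic_exists X f0.
have ref := refine_lem f0 pP EWP icP0.
move: (icP0) => [pP0 [sP0 iP0]].
have sWP : W \subset P := in_cover_sub (proj1 icR) WR.
have [W0 HW] := proj2 (proj2 icR) W WR.
have cPX : cover P = X by case/and3P: pP => /eqP.
have uniqC : forall Y C x, Y \in P -> C \in P0 -> x \in Y -> x \in C -> Y \subset C.
  move=> Y C x YP CP xY xC; have [C' C'P sYC'] := ref Y YP.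
  by rewrite (part_eq pP0 CP C'P xC (subsetP sYC' x xY)).
have [C0 C0P sWC0] : exists2 C0, C0 \in P0 & cover W \subset C0.
  case/set0Pn: W0 => Y0 Y0W; have Y0P := subsetP sWP _ Y0W.
  have [C0 C0P sY0] := ref Y0 Y0P.
  pose Z := [set Y in W | Y \subset C0].
  have HZ : forall Y, (Y \in Z) = (Y \in W) && (Y \subset C0) by move=> Y; rewrite inE.
  pose f' := fun B => \sum_(C in P0 | C != C0) f (cover B :&: C).
  have b' : boolfun f'.
    by rewrite /boolfun /f'; apply: big1 => C _; rewrite /cover big_set0 set0I.
  have sZW : Z \subset W by apply/subsetP => Y; rewrite HZ => /andP[].
  case: (HW Z f' (fquot P f) sZW b' fq0).
  - move=> B sBW; rewrite /bstar /fquot.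
    have sBP := subset_trans sBW sWP.
    have sBX : cover B \subset X by rewrite -cPX; exact: cover_sub.
    rewrite (sP0 _ sBX) (bigD1 C0) //= addrC; congr (_ + _).
      apply: eq_bigr => C /andP[CP nC]; congr f; apply/setP => x; rewrite !inE.
      apply/andP/andP => [][/bigcupP[Y YB xY] xC]; split=> //.
        apply/bigcupP; exists Y => //; rewrite in_setI in_setD HZ YB (subsetP sBW Y YB) /= andbT.
        apply/negP => sYC0; move: nC; rewrite (part_eq pP0 CP C0P xC (subsetP sYC0 x xY)).
        by rewrite eqxx.
      apply/bigcupP; exists Y => //; move: YB; rewrite !inE => /andP[].
      by [].
    congr f; apply/setP => x; rewrite !inE.
    apply/andP/bigcupP => [[/bigcupP[Y YB xY] xC] | [Y]].
      exists Y => //; rewrite in_setI HZ YB (subsetP sBW Y YB) /=.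
      exact: uniqC (subsetP sBP Y YB) C0P xY xC.
    rewrite in_setI HZ => /andP[YB /andP[_ sYC]] xY; split.
      by apply/bigcupP; exists Y.
    exact: subsetP sYC x xY.
  - move=> eZ; have : Y0 \in Z by rewrite HZ Y0W sY0.
    by rewrite eZ inE.
  - move=> eZ; exists C0 => //; apply/bigcupsP => Y YW.
    have : Y \in Z by rewrite eZ.
    by rewrite HZ => /andP[].
have rC := rX P0 icP0 C0 C0P.
move=> A B sAW sBW dAB e A' B' sA' sB'.
rewrite /fquot /cover !bigcup_setU -!/(cover _) in e *.
have sAC := subset_trans (cover_sub sAW) sWC0.
have sBC := subset_trans (cover_sub sBW) sWC0.
apply: (rC (cover A) (cover B)) => //; try exact: cover_sub.
exact: cover_disj pP (subset_trans sAW sWP) (subset_trans sBW sWP) dAB.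
Qed.

Theorem lemma4p11 :
  (forall (T : finType) (X Y : {set T}) (f g : {set T} -> int),
      [disjoint X & Y] -> boolfun f -> boolfun g ->
      (rigid (X :|: Y) (bstar X Y f g) <-> rigid X f /\ rigid Y g)) /\
  (forall (T : finType) (X Y : {set T}) (f : {set T} -> int),
      boolfun f -> rigid X f -> Y \subset X -> rigid Y f) /\
  (forall (T : finType) (X : {set T}) (f : {set T} -> int)
          (P : {set {set T}}),
      boolfun f -> rigid X f -> partition P X -> EW X f P ->
      rigid P (fquot P f)).
Proof.
split; first exact: part1.
split; first exact: part2.
exact: part3.
Qed.
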